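(* Let $E$ be a nonzero real Banach space and $f\colon E\to\,]{-}\infty,\infty]$ be proper, convex and lower semicontinuous. Then $G((\partial f)^{\mathbb F})\subset G(\partial(f^* ))$, i.e. if $(y^*,y^{**})\in G((\partial f)^{\mathbb F})$ then $f^*(y^* )+f^{**}(y^{**})=\langle y^*,y^{**}\rangle$.
   Context: $f^*(x^* )=\sup_{x\in E}[\langle x,x^*\rangle-f(x)]$, $f^{**}(x^{**})=\sup_{x^*\in E^*}[\langle x^*,x^{**}\rangle-f^*(x^* )]$; $x^*\in\partial f(x)$ iff $f(x)+f^*(x^* )=\langle x,x^*\rangle$ ($\partial f$ is closed, monotone and quasidense). For a multifunction $S\colon E\rightrightarrows E^*$ with nonempty graph: closed means $G(S)$ norm-closed; monotone means $\langle s-t,s^*-t^*\rangle\ge0$ on $G(S)$; quasidense means for every $(x,x^* )$, $\inf_{(s,s^* )\in G(S)}[\tfrac12\|s-x\|^2+\tfrac12\|s^*-x^*\|^2+\langle s-x,s^*-x^*\rangle]\le0$. Let $\varphi_S(x,x^* )=\sup_{(s,s^* )\in G(S)}[\langle s,x^*\rangle+\langle x,s^*\rangle-\langle s,s^*\rangle]$ and $\varphi_S^*$ its conjugate on $E^*\times E^{**}$ under $\langle (x,x^* ),(y^*,y^{**})\rangle=\langle x,y^*\rangle+\langle x^*,y^{**}\rangle$. For $S$ closed, monotone, quasidense, $S^{\mathbb F}\colon E^*\rightrightarrows E^{**}$ is given by $(y^*,y^{**})\in G(S^{\mathbb F})$ iff $\varphi_S^*(y^*,y^{**})=\langle y^*,y^{**}\rangle$.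 *)

(* Defs.v *)
From HB Require Import structures.
From mathcomp Require Import all_boot all_order all_algebra.
From mathcomp Require Import all_classical all_reals all_analysis.
Set Implicit Arguments. Unset Strict Implicit. Unset Printing Implicit Defensive.
Import Order.TTheory GRing.Theory Num.Theory.
Import numFieldNormedType.Exports.
Local Open Scope classical_set_scope.
Local Open Scope ring_scope.

Section Duality.
Context {R : realType} {E : normedModType R}.

Definition is_dual (xs : E -> R) : Prop :=
  (forall (a : R) (x y : E), xs (a *: x + y) = a * xs x + xs y) /\ continuous xs.

Definition dnorm (xs : E -> R) : R :=
  sup [set `|xs x| | x in [set x : E | `|x| <= 1]].

(* E^starstar : bounded (= continuous) linear functionals on (E^star, dual norm);
   only the values on E^star matter *)
Definition is_bidual (xss : (E -> R) -> R) : Prop :=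
  (forall (a : R) (xs ys : E -> R), is_dual xs -> is_dual ys ->
      xss (fun x => a * xs x + ys x) = a * xss xs + xss ys) /\
  exists M : R, forall xs, is_dual xs -> `|xss xs| <= M * dnorm xs.

Local Open Scope ereal_scope.

Definition proper_fun (f : E -> \bar R) : Prop :=
  (exists x, f x != +oo) /\ (forall x, f x != -oo).

Definition convex_fun (f : E -> \bar R) : Prop :=
  forall (x y : E) (t : R), (0 < t < 1)%R ->
    f (t *: x + (1 - t) *: y)%R <= t%:E * f x + (1 - t)%:E * f y.

Definition fconj (f : E -> \bar R) (xs : E -> R) : \bar R :=
  ereal_sup [set (xs x)%:E - f x | x in [set: E]].

Definition fbiconj (f : E -> \bar R) (xss : (E -> R) -> R) : \bar R :=
  ereal_sup [set (xss xs)%:E - fconj f xs | xs in is_dual].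

Definition subdiff_graph (f : E -> \bar R) : set (E * (E -> R)) :=
  [set p | is_dual p.2 /\ f p.1 + fconj f p.2 = (p.2 p.1)%:E].

Definition phiS (G : set (E * (E -> R))) (x : E) (xs : E -> R) : \bar R :=
  ereal_sup [set ((xs s.1 + s.2 x - s.2 s.1)%R)%:E | s in G].

Definition phiS_conj (G : set (E * (E -> R)))
    (ys : E -> R) (yss : (E -> R) -> R) : \bar R :=
  ereal_sup [set ((ys p.1 + yss p.2)%R)%:E - phiS G p.1 p.2
            | p in [set p : E * (E -> R) | is_dual p.2]].

Definition graphF (G : set (E * (E -> R))) : set ((E -> R) * ((E -> R) -> R)) :=
  [set q | is_dual q.1 /\ is_bidual q.2 /\ phiS_conj G q.1 q.2 = (q.2 q.1)%:E].

End Duality.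

(* Main.v *)
Require Import Defs.
From HB Require Import structures.
From mathcomp Require Import all_boot all_order all_algebra.
From mathcomp Require Import all_classical all_reals all_analysis.
From mathcomp Require Import lra.
Import Order.TTheory GRing.Theory Num.Theory.
Import numFieldNormedType.Exports.
Local Open Scope classical_set_scope.
Local Open Scope ring_scope.

Section Aux.
Context {R : realType} {E : normedModType R}.
Local Open Scope ereal_scope.

Lemma fy (f : E -> \bar R) xs x : (xs x)%:E - f x <= fconj f xs.
Proof. by apply: ereal_sup_ubound; exists x. Qed.

Lemma fconj_fin (f : E -> \bar R) x0 r0 xs : f x0 = r0%:E ->
  ((xs x0 - r0)%R)%:E <= fconj f xs.
Proof. by move=> h; have := fy f xs x0; rewrite h. Qed.

Lemma fconj_nNy (f : E -> \bar R) x0 r0 xs : f x0 = r0%:E ->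
  fconj f xs != -oo.
Proof.
move=> h; have := @fconj_fin f x0 r0 xs h; case: (fconj f xs) => //.
Qed.

Lemma elt_Ny (a : R) : a%:E - +oo = -oo.
Proof. by []. Qed.

Lemma elt_y (a : R) : a%:E - -oo = +oo.
Proof. by []. Qed.

End Aux.

Theorem lemma3p3 (R : realType) (E : completeNormedModType R)
    (f : E -> \bar R) :
  (exists x : E, x != 0) ->
  proper_fun f -> convex_fun f -> lower_semicontinuous f ->
  forall (ys : E -> R) (yss : (E -> R) -> R),
    graphF (subdiff_graph f) (ys, yss) ->
    (fconj f ys + fbiconj f yss = (yss ys)%:E)%E.
Proof.
move=> _ [[x0 hx0] hninf] _ _ ys yss [/= dys [_ H]].
set c := yss ys.
have [r0 f0] : exists r0, f x0 = r0%:E.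
  move: hx0 (hninf x0); case: (f x0) => [r| |] //; by exists r.
have cNy : forall xs, fconj f xs != -oo%E by move=> xs; exact: (@fconj_nNy _ _ f x0 r0 xs f0).
have L3 : forall x xs r t, f x = r%:E -> fconj f xs = t%:E ->
    (phiS (subdiff_graph f) x xs <= (r + t)%:E)%E.
  move=> x xs r t fx ft; apply: ge_ereal_sup => _ [[s1 s2] [ds2 hs] <-] /=.
  move: hs => /=.
  have fy1 := fy f xs s1; have fy2 := fy f s2 x.
  move: fy1 fy2 (hninf s1) (cNy s2); rewrite fx ft.
  case: (f s1) => [u| |]; case: (fconj f s2) => [v| |] //=;
    rewrite ?lee_fin => h1 h2 _ _ //.
  rewrite -EFinD => -[<-]; lra.
have core : forall x xs r t, is_dual xs -> f x = r%:E -> fconj f xs = t%:E ->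
    ys x - r + (yss xs - t) <= c.
  move=> x xs r t dxs fx ft.
  have h1 : (((ys x + yss xs)%R)%:E - phiS (subdiff_graph f) x xs <= c%:E)%E.
    rewrite -H; apply: ereal_sup_ubound; by exists (x, xs).
  have h2 := leeB (lexx ((ys x + yss xs)%R)%:E) (L3 _ _ _ _ fx ft).
  have := le_trans h2 h1; rewrite -EFinB lee_fin; lra.
have [[[s1 s2] [ds2 hs]]|nG] := pselect (exists s, subdiff_graph f s); last first.
  exfalso.
  have e : phiS (subdiff_graph f) x0 ys = -oo%E.
    rewrite /phiS.
    have -> : [set ((ys s.1 + s.2 x0 - s.2 s.1)%R)%:E | s in subdiff_graph f] = set0.
      apply/seteqP; split=> // y [s hs _]; apply: nG; by exists s.
    exact: ereal_sup0.
  have : (((ys x0 + yss ys)%R)%:E - phiS (subdiff_graph f) x0 ys <= c%:E)%E.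
    rewrite -H; apply: ereal_sup_ubound; by exists (x0, ys).
  by rewrite e elt_y.
move: hs => /= hs.
have [u fu] : exists u, f s1 = u%:E.
  move: (hninf s1) (cNy s2) hs; case: (f s1) => [u| |]; case: (fconj f s2) => [v| |] //=;
    try by exists u.
have [v fv] : exists v, fconj f s2 = v%:E.
  move: (cNy s2) hs; rewrite fu; case: (fconj f s2) => [v| |] //=; try by exists v.
have [a hA] : exists a, fconj f ys = a%:E.
  have lo := @fconj_fin _ _ f x0 r0 ys f0.
  have hi : (fconj f ys <= (c - (yss s2 - v))%:E)%E.
    apply: ge_ereal_sup => _ [x _ <-].
    move: (hninf x); case hfx: (f x) => [r| |] //= _.
      rewrite -EFinB lee_fin; have := core _ _ _ _ ds2 hfx fv; lra.
    by rewrite elt_Ny leNye.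
  move: lo hi; case: (fconj f ys) => [a| |] //= _ _; by exists a.
have [b hB] : exists b, fbiconj f yss = b%:E.
  have lo : (((yss s2 - v)%R)%:E <= fbiconj f yss)%E.
    apply: ereal_sup_ubound; exists s2 => //; by rewrite fv.
  have hi : (fbiconj f yss <= (c - (ys x0 - r0))%:E)%E.
    apply: ge_ereal_sup => _ [xs dxs <-].
    move: (cNy xs); case hft: (fconj f xs) => [t| |] //= _.
      rewrite -EFinB lee_fin; have := core _ _ _ _ dxs f0 hft; lra.
    by rewrite elt_Ny leNye.
  move: lo hi; case: (fbiconj f yss) => [b| |] //= _ _; by exists b.
have up : a <= c - b.
  rewrite -lee_fin -hA; apply: ge_ereal_sup => _ [x _ <-].
  move: (hninf x); case hfx: (f x) => [r| |] //= _; last by rewrite elt_Ny leNye.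
  rewrite -EFinB lee_fin.
  suff : b <= c - (ys x - r) by lra.
  rewrite -lee_fin -hB; apply: ge_ereal_sup => _ [xs dxs <-].
  move: (cNy xs); case hft: (fconj f xs) => [t| |] //= _; last by rewrite elt_Ny leNye.
  rewrite -EFinB lee_fin; have := core _ _ _ _ dxs hfx hft; lra.
have lo : c - a <= b.
  rewrite -lee_fin -hB EFinB -hA; apply: ereal_sup_ubound; by exists ys.
rewrite hA hB -EFinD; congr (_%:E); apply/eqP; rewrite eq_le; apply/andP; split; lra.
Qed.
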